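(* Let $k\ge 2$. If $G$ is a finite simple graph admitting a closed neighborhood balanced $k$-coloring, then the Cartesian product $G\,\square\, K_2$ admits a neighborhood-balanced $k$-coloring.
   Context: For a vertex $v$, $N(v)=\{u: uv\in E\}$ and $N[v]=N(v)\cup\{v\}$. A neighborhood-balanced $k$-coloring of a graph is a map $c:V\to\{1,\dots,k\}$ such that for every vertex $v$ the numbers $|\{u\in N(v): c(u)=i\}|$, $i=1,\dots,k$, are all equal; a closed neighborhood balanced $k$-coloring is defined likewise with $N[v]$ in place of $N(v)$. The Cartesian product $G\,\square\,H$ has vertex set $V(G)\times V(H)$, with $(g,h)$ adjacent to $(g',h')$ iff ($g=g'$ and $hh'\in E(H)$) or ($h=h'$ and $gg'\in E(G)$). *)

(* Defs.v *)
From mathcomp Require Import all_boot.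
Set Implicit Arguments. Unset Strict Implicit. Unset Printing Implicit Defensive.

Definition simple_graph (T : finType) (e : rel T) : Prop :=
  symmetric e /\ irreflexive e.

Definition open_nbhd (T : finType) (e : rel T) (v : T) : {set T} :=
  [set u | e v u].
Definition closed_nbhd (T : finType) (e : rel T) (v : T) : {set T} :=
  v |: open_nbhd e v.

Definition color_count (T : finType) (k : nat) (c : T -> 'I_k)
  (S : {set T}) (i : 'I_k) : nat := #|[set u in S | c u == i]|.

Definition nbhd_balanced (T : finType) (e : rel T) (k : nat) (c : T -> 'I_k) : Prop :=
  forall v : T, forall i j : 'I_k,
    color_count c (open_nbhd e v) i = color_count c (open_nbhd e v) j.

Definition closed_nbhd_balanced (T : finType) (e : rel T) (k : nat) (c : T -> 'I_k) : Prop :=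
  forall v : T, forall i j : 'I_k,
    color_count c (closed_nbhd e v) i = color_count c (closed_nbhd e v) j.

Definition K2_rel : rel bool := fun a b => a != b.

Definition cart_prod (T U : finType) (e : rel T) (f : rel U) : rel (T * U) :=
  fun x y => ((x.1 == y.1) && f x.2 y.2) || ((x.2 == y.2) && e x.1 y.1).

(* Main.v *)
Require Import Defs.
From mathcomp Require Import all_boot.

Lemma count_eq (T : finType) (e : rel T) (k : nat) (c : T -> 'I_k) :
  irreflexive e -> forall v b i,
  color_count (fun x : T * bool => c x.1) (open_nbhd (cart_prod e K2_rel) (v, b)) i
  = color_count c (closed_nbhd e v) i.
Proof.
move=> irr v b i; rewrite /color_count.
pose f := fun u : T => (u, (u == v) (+) b).
have finj : injective f by move=> x y [].
rewrite -[RHS](card_imset _ finj); congr (#|pred_of_set _|); apply/eqP; rewrite eqEsubset.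
apply/andP; split; apply/subsetP.
- case=> w b'; rewrite !inE /cart_prod /K2_rel /= => /andP [H Hc].
  apply/imsetP; exists w.
    rewrite !inE Hc andbT.
    case/orP: H => /andP [H1 H2]; first by rewrite eq_sym H1.
    by rewrite H2 orbT.
  rewrite /f; case/orP: H => /andP [/eqP H1 H2].
    by subst w; rewrite eqxx; move: H2; clear; case: b b' => [] [].
  subst b'.
  case: (w =P v) => Hw; last by [].
  by subst w; rewrite irr in H2.
- move=> x /imsetP [w]; rewrite !inE => /andP [H Hc] ->.
  rewrite /f /cart_prod /K2_rel /= Hc andbT.
  case/orP: H => [/eqP -> | H]; first by rewrite !eqxx /= irr andbF orbF; clear finj f; case: b.
  case: (w =P v) => Hw; first by subst w; rewrite irr in H.
  by rewrite /= eqxx H orbT.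
Qed.

Theorem theorem2p19 (T : finType) (e : rel T) (k : nat) :
  2 <= k ->
  simple_graph e ->
  (exists c : T -> 'I_k, closed_nbhd_balanced e c) ->
  exists c' : T * bool -> 'I_k, nbhd_balanced (cart_prod e K2_rel) c'.
Proof.
move=> _ [_ irr] [c Hc]; exists (fun x => c x.1).
case=> v b i j; rewrite !(@count_eq _ _ _ c irr); exact: Hc.
Qed.
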